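(* Let $F_1,\dots,F_n:\mathbb{R}^d\to\mathbb{R}^d$ with each $F_i$ being $L_i$-Lipschitz, $F=\frac1n\sum_iF_i$, $F(x^* )=0$. Let $v\in\mathbb{R}^n_+$ be a random vector with $\mathbb{E}[v_i]=1$ and $\mathbb{E}[v_i^2]<\infty$ for all $i$, and $F_v(x)=\frac1n\sum_iv_iF_i(x)$. Then for all $x\in\mathbb{R}^d$, $$\mathbb{E}\|(F_v(x)-F_v(x^* ))-(F(x)-F(x^* ))\|^2\le\frac\delta2\|x-x^*\|^2\quad\text{with}\quad\delta=\frac2n\sum_{i=1}^nL_i^2\,\mathbb{E}(v_i^2).$$ If in addition $F$ is $\mu$-quasi strongly monotone, then the same inequality holds with $\delta=\frac2n\sum_{i=1}^nL_i^2\,\mathbb{E}(v_i^2)-2\mu^2$.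
   Context: $L_i$-Lipschitz: $\|F_i(x)-F_i(y)\|\le L_i\|x-y\|$. $\mu$-quasi strongly monotone ($\mu>0$): $\langle F(x),x-x^*\rangle\ge\mu\|x-x^*\|^2$ for all $x$. *)

(* Defs.v *)
From HB Require Import structures.
From mathcomp Require Import all_boot all_order all_algebra.
From mathcomp Require Import all_classical all_reals all_analysis.
Unset Printing Implicit Defensive.
Import Order.TTheory GRing.Theory Num.Theory.
Local Open Scope ring_scope.

(* R^d is modelled as row vectors 'rV[R]_d with the Euclidean inner product/norm. *)
Definition dotv {R : realType} {d : nat} (x y : 'rV[R]_d) : R :=
  \sum_(j < d) x 0 j * y 0 j.

Definition enorm {R : realType} {d : nat} (x : 'rV[R]_d) : R :=
  Num.sqrt (dotv x x).

Definition Lipschitz_with {R : realType} {d : nat} (G : 'rV[R]_d -> 'rV[R]_d) (L : R) : Prop :=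
  forall x y, enorm (G x - G y) <= L * enorm (x - y).

Definition quasi_strongly_monotone {R : realType} {d : nat}
  (G : 'rV[R]_d -> 'rV[R]_d) (mu : R) (xs : 'rV[R]_d) : Prop :=
  forall x, mu * enorm (x - xs) ^+ 2 <= dotv (G x) (x - xs).

Definition avgop {R : realType} {d n : nat} (Fs : 'I_n -> 'rV[R]_d -> 'rV[R]_d) :
  'rV[R]_d -> 'rV[R]_d := fun x => n%:R^-1 *: \sum_(i < n) Fs i x.

Definition wavgop {R : realType} {d n : nat} (Fs : 'I_n -> 'rV[R]_d -> 'rV[R]_d)
  (v : 'I_n -> R) : 'rV[R]_d -> 'rV[R]_d :=
  fun x => n%:R^-1 *: \sum_(i < n) v i *: Fs i x.

(* Main.v *)
Require Import Defs.
From HB Require Import structures.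
From mathcomp Require Import all_boot all_order all_algebra.
From mathcomp Require Import all_classical all_reals all_analysis.
From mathcomp Require Import ring lra measurable_realfun.
Import Order.TTheory GRing.Theory Num.Theory.
Local Open Scope ring_scope.

Section Dot.
Context {R : realType} {d : nat}.
Implicit Types x y z : 'rV[R]_d.

Lemma dotvDl x y z : dotv (x + y) z = dotv x z + dotv y z.
Proof. by rewrite /dotv -big_split; apply: eq_bigr => j _; rewrite mxE mulrDl. Qed.
Lemma dotvC x y : dotv x y = dotv y x.
Proof. by rewrite /dotv; apply: eq_bigr => j _; rewrite mulrC. Qed.
Lemma dotvDr x y z : dotv z (x + y) = dotv z x + dotv z y.
Proof. by rewrite dotvC dotvDl !(dotvC z). Qed.
Lemma dotvZl a x y : dotv (a *: x) y = a * dotv x y.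
Proof. by rewrite /dotv mulr_sumr; apply: eq_bigr => j _; rewrite mxE mulrA. Qed.
Lemma dotvZr a x y : dotv y (a *: x) = a * dotv y x.
Proof. by rewrite dotvC dotvZl dotvC. Qed.
Lemma dotvNl x y : dotv (- x) y = - dotv x y.
Proof. by rewrite -scaleN1r dotvZl mulN1r. Qed.
Lemma dotvNr x y : dotv y (- x) = - dotv y x.
Proof. by rewrite dotvC dotvNl dotvC. Qed.
Lemma dotvBl x y z : dotv (x - y) z = dotv x z - dotv y z.
Proof. by rewrite dotvDl dotvNl. Qed.
Lemma dotvBr x y z : dotv z (x - y) = dotv z x - dotv z y.
Proof. by rewrite dotvDr dotvNr. Qed.
Lemma dotv0l y : dotv 0 y = 0.
Proof. by rewrite /dotv big1 // => j _; rewrite mxE mul0r. Qed.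
Lemma dotv_suml I (s : seq I) (P : pred I) (f : I -> 'rV[R]_d) z :
  dotv (\sum_(i <- s | P i) f i) z = \sum_(i <- s | P i) dotv (f i) z.
Proof.
apply: (big_ind2 (fun a b => dotv a z = b)); first exact: dotv0l.
  by move=> a b c e <- <-; rewrite dotvDl.
by [].
Qed.
Lemma dotv_ge0 x : 0 <= dotv x x.
Proof. by apply: sumr_ge0 => j _; rewrite -expr2 sqr_ge0. Qed.
Lemma enorm_sq x : enorm x ^+ 2 = dotv x x.
Proof. by rewrite /enorm sqr_sqrtr // dotv_ge0. Qed.
Lemma enorm_ge0 x : 0 <= enorm x.
Proof. exact: sqrtr_ge0. Qed.

Lemma jensen_dot n (b : 'I_n -> 'rV[R]_d) : (0 < n)%N ->
  dotv (n%:R^-1 *: \sum_i b i) (n%:R^-1 *: \sum_i b i)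
  <= n%:R^-1 * \sum_i dotv (b i) (b i).
Proof.
move=> hn; set m := n%:R^-1 *: \sum_i b i.
have hS : \sum_i b i = n%:R *: m.
  by rewrite /m scalerA mulfV ?scale1r // pnatr_eq0 -lt0n.
have h0 : 0 <= \sum_i dotv (b i - m) (b i - m) by apply: sumr_ge0 => i _; exact: dotv_ge0.
have e : \sum_i dotv (b i - m) (b i - m) =
   \sum_i dotv (b i) (b i) - 2 * dotv (\sum_i b i) m + n%:R * dotv m m.
  rewrite dotv_suml.
  have -> : n%:R * dotv m m = \sum_(i < n) dotv m m by rewrite sumr_const card_ord mulr_natl.
  rewrite mulr_sumr -sumrB -big_split /=; apply: eq_bigr => i _.
  rewrite !dotvBl !dotvBr (dotvC m (b i)); ring.
rewrite e hS dotvZl in h0.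
have np : 0 < n%:R :> R by rewrite ltr0n.
rewrite ler_pdivlMl //.
nra.
Qed.
End Dot.

Lemma pt_bound (R : realType) (d n : nat) (hn : (0 < n)%N) (vv : 'I_n -> R)
  (a : 'I_n -> 'rV[R]_d) (m : 'rV[R]_d) (hm : m = n%:R^-1 *: \sum_i a i) :
  dotv (n%:R^-1 *: \sum_i vv i *: a i - m) (n%:R^-1 *: \sum_i vv i *: a i - m)
  <= \sum_i (n%:R^-1 * dotv (a i) (a i) * vv i ^+ 2
             + (- (2 * n%:R^-1 * dotv (a i) m)) * vv i) + dotv m m.
Proof.
set u := n%:R^-1 *: \sum_i vv i *: a i.
have hu : dotv u u <= n%:R^-1 * \sum_i vv i ^+ 2 * dotv (a i) (a i).
  have J : dotv u u <= n%:R^-1 * \sum_i dotv (vv i *: a i) (vv i *: a i).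
    exact: (@jensen_dot _ _ _ (fun i => vv i *: a i) hn).
  apply: (le_trans J).
  rewrite le_eqVlt; apply/orP; left; apply/eqP; congr (_ * _).
  by apply: eq_bigr => i _; rewrite dotvZl dotvZr mulrA expr2.
have hum : dotv u m = n%:R^-1 * \sum_i vv i * dotv (a i) m.
  by rewrite /u dotvZl dotv_suml; congr (_ * _); apply: eq_bigr => i _; rewrite dotvZl.
have e : dotv (u - m) (u - m) = dotv u u - 2 * dotv u m + dotv m m.
  rewrite !dotvBl !dotvBr (dotvC m u); ring.
have e2 : \sum_i (n%:R^-1 * dotv (a i) (a i) * vv i ^+ 2
             + (- (2 * n%:R^-1 * dotv (a i) m)) * vv i)
   = n%:R^-1 * \sum_i vv i ^+ 2 * dotv (a i) (a i) - 2 * (n%:R^-1 * \sum_i vv i * dotv (a i) m).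
  rewrite big_split /=; congr (_ + _).
    by rewrite mulr_sumr; apply: eq_bigr => i _; ring.
  by rewrite mulr_sumr mulr_sumr -sumrN; apply: eq_bigr => i _; ring.
rewrite e e2 hum; lra.
Qed.

Lemma helper1 (R : realType) (A B : R) : 0 <= B -> A - B <= A.
Proof. move=> h; lra. Qed.

Lemma helper1' (R : realType) (n : nat) (S e B : R) : (0 < n)%N -> 0 <= B ->
  n%:R^-1 * S * e - B <= 2 / n%:R * S / 2 * e.
Proof.
move=> hn h; have -> : 2 / n%:R * S / 2 = n%:R^-1 * S by field; rewrite pnatr_eq0 -lt0n.
lra.
Qed.

Lemma helper2 (R : realType) (n : nat) (S e D mu : R) : (0 < n)%N -> mu ^+ 2 * e <= D ->
  n%:R^-1 * S * e - D <= (2 / n%:R * S - 2 * mu ^+ 2) / 2 * e.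
Proof.
move=> hn h; have -> : (2 / n%:R * S - 2 * mu ^+ 2) / 2 = n%:R^-1 * S - mu ^+ 2 by field; rewrite pnatr_eq0 -lt0n.
lra.
Qed.

Lemma qsm_norm (R : realType) (d : nat) (y z : 'rV[R]_d) (mu : R) : 0 < mu ->
  mu * dotv y y <= dotv z y -> mu ^+ 2 * dotv y y <= dotv z z.
Proof.
move=> mu0 q.
have h0 := dotv_ge0 (z - mu *: y).
rewrite !dotvBl !dotvBr !dotvZl !dotvZr (dotvC y z) in h0.
nra.
Qed.

Local Open Scope ereal_scope.

Theorem propositionD1 (R : realType) (d n : nat) (hn : (0 < n)%N)
  (Fs : 'I_n -> 'rV[R]_d -> 'rV[R]_d) (L : 'I_n -> R)
  (hL : forall i, Lipschitz_with (Fs i) (L i))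
  (xs : 'rV[R]_d) (hxs : avgop Fs xs = 0%R)
  (d0 : measure_display) (T : measurableType d0) (P : probability T R)
  (v : T -> 'I_n -> R)
  (v_meas : forall i, measurable_fun setT (fun w => v w i))
  (v_ge0 : forall w i, (0 <= v w i)%R)
  (v_mean : forall i, \int[P]_w (v w i)%:E = 1)
  (v_sq : forall i, \int[P]_w ((v w i) ^+ 2)%:E < +oo) :
  let Ev2 := fun i => fine (\int[P]_w ((v w i) ^+ 2)%:E) in
  let F := avgop Fs in
  let Fv := fun w => wavgop Fs (v w) in
  let err := fun x w => enorm ((Fv w x - Fv w xs) - (F x - F xs)) in
  (let delta := (2 / n%:R * \sum_(i < n) L i ^+ 2 * Ev2 i)%R in
   forall x, \int[P]_w ((err x w) ^+ 2)%:E <= (delta / 2 * enorm (x - xs) ^+ 2)%:E)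
  /\
  (forall mu : R, (0 < mu)%R -> quasi_strongly_monotone F mu xs ->
   let delta := (2 / n%:R * \sum_(i < n) L i ^+ 2 * Ev2 i - 2 * mu ^+ 2)%R in
   forall x, \int[P]_w ((err x w) ^+ 2)%:E <= (delta / 2 * enorm (x - xs) ^+ 2)%:E).
Proof.
move=> Ev2 F Fv err.
have hv1 : forall i, P.-integrable setT (fun w => (v w i)%:E).
  move=> i; apply/integrableP; split; first exact/measurable_EFinP.
  under eq_integral => w _ do rewrite abse_EFin ger0_norm //.
  by rewrite v_mean ltry.
have hv2 : forall i, P.-integrable setT (fun w => (v w i ^+ 2)%:E).
  move=> i; apply/integrableP; split.
    by apply/measurable_EFinP; apply: measurable_funX.
  under eq_integral => w _ do rewrite abse_EFin ger0_norm ?sqr_ge0 //.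
  exact: v_sq.
have hE2 : forall i, \int[P]_w ((v w i) ^+ 2)%:E = (Ev2 i)%:E.
  move=> i; rewrite /Ev2 fineK // ge0_fin_numE //.
  by apply: integral_ge0 => w _; rewrite lee_fin sqr_ge0.
have Ev2_ge0 : forall i, (0 <= Ev2 i)%R.
  by move=> i; apply: fine_ge0; apply: integral_ge0 => w _; rewrite lee_fin sqr_ge0.
have key : forall x, \int[P]_w ((err x w) ^+ 2)%:E <=
   ((n%:R^-1 * \sum_(i < n) L i ^+ 2 * Ev2 i) * enorm (x - xs) ^+ 2
     - enorm (F x - F xs) ^+ 2)%:E.
  move=> x.
  set a := fun i => (Fs i x - Fs i xs)%R.
  set m := (F x - F xs)%R.
  have hm : (m = n%:R^-1 *: \sum_i a i)%R.
    by rewrite /m /F /avgop -scalerBr -sumrB.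
  have hE : forall w, (Fv w x - Fv w xs - (F x - F xs) =
      n%:R^-1 *: \sum_i v w i *: a i - m)%R.
    move=> w; rewrite /Fv /wavgop -scalerBr -sumrB.
    by congr (_ *: _ - _)%R; apply: eq_bigr => i _; rewrite scalerBr.
  set c := fun i => (n%:R^-1 * dotv (a i) (a i))%R.
  set b := fun i => (- (2 * n%:R^-1 * dotv (a i) m))%R.
  set k := dotv m m.
  set g := fun w => (\sum_i (c i * v w i ^+ 2 + b i * v w i) + k)%R.
  have herr : forall w, (err x w ^+ 2 =
      dotv (n%:R^-1 *: \sum_i v w i *: a i - m) (n%:R^-1 *: \sum_i v w i *: a i - m))%R.
    by move=> w; rewrite /err hE enorm_sq.
  have mg : measurable_fun setT g.
    apply: measurable_funD; last exact: measurable_cst.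
    apply: measurable_sum => i; apply: measurable_funD; apply: measurable_funM;
      try exact: measurable_cst.
      exact: measurable_funX.
    exact: v_meas.
  have merr : measurable_fun setT (fun w => err x w ^+ 2)%R.
    have -> : (fun w => err x w ^+ 2)%R = (fun w => \sum_j
       ((n%:R^-1 * \sum_i v w i * a i 0 j - m 0 j) * (n%:R^-1 * \sum_i v w i * a i 0 j - m 0 j)))%R.
      apply/funext => w; rewrite herr /dotv; apply: eq_bigr => j _.
      by rewrite !mxE summxE; congr ((_ * _ - _) * (_ * _ - _))%R; apply: eq_bigr => i _; rewrite mxE.
    apply: measurable_sum => j; apply: measurable_funM; apply: measurable_funB;
      try exact: measurable_cst;
      apply: measurable_funM; try exact: measurable_cst;
      apply: measurable_sum => i; apply: measurable_funM; try exact: measurable_cst;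
      exact: v_meas.
  have Ig : \int[P]_w (g w)%:E = ((\sum_i (c i * Ev2 i + b i)) + k)%:E.
    rewrite /g.
    under eq_integral => w _ do rewrite EFinD -sumEFin.
    rewrite integralD //; last first.
      exact: finite_measure_integrable_cst.
      apply: integrable_sum => // i _.
      under eq_fun => w do rewrite EFinD (EFinM (c i)) (EFinM (b i)).
      by apply: integrableD => //; apply: integrableZl.
    rewrite integral_cst // [X in k%:E * X](_ : _ = 1) ?mule1; last exact: probability_setT.
    rewrite integral_sum //; last first.
      move=> i.
      under eq_fun => w do rewrite EFinD (EFinM (c i)) (EFinM (b i)).
      by apply: integrableD => //; apply: integrableZl.
    rewrite EFinD; congr (_ + _); rewrite -sumEFin; apply: eq_bigr => i _.
    under eq_integral => w _ do rewrite EFinD (EFinM (c i)) (EFinM (b i)).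
    rewrite integralD //; try by apply: integrableZl.
    by rewrite !integralZl // hE2 v_mean mule1.
  apply: (le_trans (ge0_le_integral P measurableT (f2 := fun w => (g w)%:E) _ _ _ _)).
  - by move=> w _; rewrite lee_fin sqr_ge0.
  - exact/measurable_EFinP.
  - exact/measurable_EFinP.
  - by move=> w _; rewrite lee_fin herr; apply: pt_bound.
  rewrite Ig lee_fin.
  have hB : (\sum_i dotv (a i) m = n%:R * dotv m m)%R.
    rewrite -dotv_suml.
    have -> : (\sum_i a i = n%:R *: m)%R.
      by rewrite hm scalerA mulfV ?scale1r // pnatr_eq0 -lt0n.
    by rewrite dotvZl.
  have hA : forall i, (dotv (a i) (a i) <= L i ^+ 2 * enorm (x - xs) ^+ 2)%R.
    move=> i; rewrite -enorm_sq -exprMn.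
    have h1 := hL i x xs; have h2 := enorm_ge0 (a i).
    have h3 : (0 <= L i * enorm (x - xs))%R by exact: le_trans h1.
    by rewrite ler_pXn2r // nnegrE.
  have np : (0 < n%:R :> R)%R by rewrite ltr0n.
  have e1 : (\sum_i (c i * Ev2 i + b i) = n%:R^-1 * \sum_i dotv (a i) (a i) * Ev2 i - 2 * k)%R.
    rewrite big_split /= mulr_sumr; congr (_ + _)%R.
      by apply: eq_bigr => i _; rewrite /c; ring.
    rewrite sumrN -mulr_sumr hB /k; congr (- _)%R; field.
    by rewrite gt_eqF.
  rewrite e1 /k -enorm_sq -/m.
  have : (\sum_i dotv (a i) (a i) * Ev2 i <= (\sum_(i < n) L i ^+ 2 * Ev2 i) * enorm (x - xs) ^+ 2)%R.
    rewrite mulr_suml; apply: ler_sum => i _.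
    by rewrite mulrAC ler_wpM2r.
  have : (0 < n%:R^-1 :> R)%R by rewrite invr_gt0.
  set S1 := (\sum_i _)%R; set S2 := (\sum_i _)%R.
  move=> h0 h. rewrite mulrA.
  nra.
split.
- move=> delta x; apply: (le_trans (key x)); rewrite lee_fin /delta.
  by apply: helper1' => //; apply: sqr_ge0.
- move=> mu mu0 qsm delta x; apply: (le_trans (key x)); rewrite lee_fin /delta.
  have hF : (F xs = 0)%R by exact: hxs.
  rewrite hF subr0; apply: helper2 => //.
  rewrite !enorm_sq; apply: qsm_norm => //.
  by have := qsm x; rewrite enorm_sq.
Qed.
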